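(* Fix $\mathcal{D}_n$ and $\hat\theta$. Let $r\in\{1,\dots,n-1\}$. Define $h_i^{mVc}=|y_i^p-\hat y^s(x_i,\hat\theta)|\,(g_i^Tg_i)^{1/2}$, $i=1,\dots,n$, let $h^{mVc}_{(1)}\le\dots\le h^{mVc}_{(n)}$ be their order statistics, set $h^{mVc}_{(n+1)}=\infty$, and assume $h^{mVc}_{(n-r)}>0$. Let $k=\min\{s:0\le s\le r,\ (r-s)h^{mVc}_{(n-s)}<\sum_{i=1}^{n-s}h^{mVc}_{(i)}\}$ and $M=\frac{1}{r-k}\sum_{i=1}^{n-k}h^{mVc}_{(i)}$. Then the probabilities $$\pi_i^{mVc}=r\frac{h_i^{mVc}\wedge M}{\sum_{j=1}^n(h_j^{mVc}\wedge M)},\quad i=1,\dots,n,$$ minimize $\mathrm{tr}(\tilde V)$ over all $(\pi_1,\dots,\pi_n)$ with $\sum_{i=1}^n\pi_i=r$ and $0<\pi_i\le1$ (i.e. Poisson subsampling with these probabilities is mVc-optimal).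
   Context: Physical data $\mathcal{D}_n=\{(x_i,y_i^p)\}_{i=1}^n$ with $x_i\in\Omega\subset\mathbb{R}^d$; $\hat y^s(x,\theta)$ is a surrogate of a computer model, differentiable in $\theta\in\Theta\subset\mathbb{R}^q$; $\hat\theta=\arg\min_{\theta\in\Theta}\frac1n\sum_{i=1}^n[y_i^p-\hat y^s(x_i,\theta)]^2$. $g_i=\nabla_\theta\hat y^s(x_i,\hat\theta)$ (column vector). For subsampling probabilities $\pi_i$, $\tilde V=\frac{4}{n^2}\sum_{i=1}^n\frac{1-\pi_i}{\pi_i}[y_i^p-\hat y^s(x_i,\hat\theta)]^2g_ig_i^T$. $a\wedge b=\min(a,b)$. *)

(* Defs.v *)
From HB Require Import structures.
From mathcomp Require Import all_boot all_order all_algebra.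
From mathcomp Require Import all_classical all_reals all_analysis.
Set Implicit Arguments. Unset Strict Implicit. Unset Printing Implicit Defensive.
Import Order.TTheory GRing.Theory Num.Theory.
Import numFieldNormedType.Exports.
Local Open Scope ring_scope.

Section Defs.
Variable R : realType.

Definition grad (q : nat) (f : 'rV[R]_q -> R) (th : 'rV[R]_q) : 'cV[R]_q :=
  \col_(j < q) ('D_(delta_mx 0 j) f th).

Definition resid (d q n : nat) (x : 'I_n -> 'rV[R]_d) (y : 'I_n -> R)
  (ys : 'rV[R]_d -> 'rV[R]_q -> R) (th : 'rV[R]_q) (i : 'I_n) : R :=
  y i - ys (x i) th.

Definition loss (d q n : nat) (x : 'I_n -> 'rV[R]_d) (y : 'I_n -> R)
  (ys : 'rV[R]_d -> 'rV[R]_q -> R) (th : 'rV[R]_q) : R :=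
  n%:R^-1 * \sum_(i < n) (resid x y ys th i) ^+ 2.

Definition Vtilde (q n : nat) (e : 'I_n -> R) (g : 'I_n -> 'cV[R]_q)
  (pi : 'I_n -> R) : 'M[R]_q :=
  (4 / (n%:R ^+ 2)) *:
    \sum_(i < n) (((1 - pi i) / pi i) * (e i) ^+ 2) *: (g i *m (g i)^T).

Definition hmVc (q n : nat) (e : 'I_n -> R) (g : 'I_n -> 'cV[R]_q) (i : 'I_n) : R :=
  `|e i| * Num.sqrt (((g i)^T *m g i) 0 0).

(* sorted values: hsorted`_(j-1) is the order statistic h_(j), j = 1..n *)
Definition hsorted (n : nat) (h : 'I_n -> R) : seq R :=
  sort <=%R [seq h i | i <- enum 'I_n].

Definition hord (n : nat) (h : 'I_n -> R) (j : nat) : \bar R :=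
  if (1 <= j <= n)%N then ((hsorted h)`_(j.-1))%:E else +oo%E.

Definition hsum (n : nat) (h : 'I_n -> R) (m : nat) : R :=
  \sum_(0 <= i < m) (hsorted h)`_i.

Definition kcond (n r : nat) (h : 'I_n -> R) (s : nat) : bool :=
  (((r - s)%:R)%:E * hord h (n - s) < (hsum h (n - s))%:E)%E.

Definition kmin (n r : nat) (h : 'I_n -> R) : nat :=
  find (kcond r h) (iota 0 r.+1).

Definition Mthr (n r : nat) (h : 'I_n -> R) : R :=
  hsum h (n - kmin r h) / (r - kmin r h)%:R.

Definition pimVc (n r : nat) (h : 'I_n -> R) (i : 'I_n) : R :=
  r%:R * Num.min (h i) (Mthr r h) / \sum_(j < n) Num.min (h j) (Mthr r h).

End Defs.

(* Main.v *)
Require Import Defs.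
From HB Require Import structures.
From mathcomp Require Import all_boot all_order all_algebra.
From mathcomp Require Import all_classical all_reals all_analysis.
From mathcomp Require Import ring lra zify.
Import Order.TTheory GRing.Theory Num.Theory.
Import numFieldNormedType.Exports.
Set Implicit Arguments. Unset Strict Implicit.
Local Open Scope ring_scope.

Section H.
Variable R : realType.

Lemma hs_size n (h : 'I_n -> R) : size (hsorted h) = n.
Proof. by rewrite size_sort size_map size_enum_ord. Qed.

Lemma hs_sum n (h : 'I_n -> R) (F : R -> R) :
  \sum_(i < n) F (h i) = \sum_(0 <= i < n) F (hsorted h)`_i.
Proof.
have -> : \sum_(i < n) F (h i) = \sum_(x <- [seq h i | i <- enum 'I_n]) F x.
  by rewrite big_map big_enum.
rewrite -(perm_big _ (permEl (perm_sort <=%R _))) (big_nth 0) hs_size.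
by [].
Qed.

Lemma hs_sorted n (h : 'I_n -> R) i j : (i <= j)%N -> (j < n)%N ->
  (hsorted h)`_i <= (hsorted h)`_j.
Proof.
move=> ij jn.
have so : sorted <=%R (hsorted h) by apply: sort_sorted; exact: le_total.
apply: (sorted_leq_nth le_trans lexx 0 so) => //; rewrite inE hs_size //.
exact: leq_ltn_trans jn.
Qed.

Lemma hs_ge0 n (h : 'I_n -> R) i : (forall j, 0 <= h j) -> (i < n)%N ->
  0 <= (hsorted h)`_i.
Proof.
move=> h0 i_n.
have : (hsorted h)`_i \in hsorted h by apply: mem_nth; rewrite hs_size.
by rewrite mem_sort => /mapP [j _ ->].
Qed.


Lemma hsumS n (h : 'I_n -> R) m : hsum h m.+1 = hsum h m + (hsorted h)`_m.
Proof. by rewrite /hsum big_nat_recr. Qed.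

Lemma hsum_ge0 n (h : 'I_n -> R) m : (forall j, 0 <= h j) -> (m <= n)%N ->
  0 <= hsum h m.
Proof.
move=> h0 mn; rewrite /hsum big_nat_cond; apply: sumr_ge0 => i /andP [/andP [_ im] _].
apply: hs_ge0 => //; exact: leq_trans im mn.
Qed.

Lemma kcondE n r (h : 'I_n -> R) t : (t < n)%N ->
  kcond r h t = ((r - t)%:R * (hsorted h)`_(n - t).-1 < hsum h (n - t)).
Proof.
move=> tn; rewrite /kcond /hord.
have -> : (1 <= n - t <= n)%N by rewrite subn_gt0 tn leq_subr.
by rewrite -EFinM lte_fin.
Qed.

Lemma key n r (h : 'I_n -> R) : (forall j, 0 <= h j) -> (1 <= r <= n.-1)%N ->
  (0 < hord h (n - r))%E ->
  0 < Mthr r h /\ \sum_(j < n) Num.min (h j) (Mthr r h) = r%:R * Mthr r h.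
Proof.
move=> h0 /andP [r1 rn] hpos.
have rn' : (r < n)%N by lia.
set s := hsorted h.
have pos : 0 < s`_(n - r).-1.
  move: hpos; rewrite /hord.
  have -> : (1 <= n - r <= n)%N by rewrite subn_gt0 rn' leq_subr.
  by rewrite lte_fin.
have Hr1 : kcond r h r.-1.
  rewrite kcondE; last by lia.
  have -> : (r - r.-1 = 1)%N by lia.
  have -> : (n - r.-1 = (n - r).+1)%N by lia.
  rewrite /= hsumS mul1r ltrDr.
  have -> : (n - r = (n - r).-1.+1)%N by lia.
  rewrite hsumS; apply: ltr_wpDl => //; apply: hsum_ge0 => //; lia.
set k := kmin r h.
have kr : (k <= r.-1)%N.
  rewrite leqNgt; apply/negP => lt.
  have := before_find 0 lt; rewrite nth_iota; last by lia.
  by rewrite add0n Hr1.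
have kn : (k < n)%N by lia.
have Hk : kcond r h k.
  have := @nth_find _ 0 (kcond r h) (iota 0 r.+1).
  change (find (kcond r h) (iota 0 r.+1)) with k.
  rewrite nth_iota; last by lia.
  rewrite add0n; apply; apply/hasP; exists r.-1 => //.
  rewrite mem_iota add0n; lia.
have Hk1 : (0 < k)%N -> ~~ kcond r h k.-1.
  move=> k0; apply/negP => c; have : (k.-1 < k)%N by lia.
  move/(before_find 0); rewrite nth_iota; last by lia.
  by rewrite add0n c.
move: Hk; rewrite kcondE // => Hk.
have rk : (0 < r - k)%N by lia.
have rkR : 0 < (r - k)%:R :> R by rewrite ltr0n.
set m := (n - k)%N.
have m0 : (0 < m)%N by lia.
have Mdef : Mthr r h = hsum h m / (r - k)%:R by [].
have sm0 : 0 <= s`_m.-1 by apply: hs_ge0 => //; lia.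
have Mpos : 0 < Mthr r h.
  rewrite Mdef divr_gt0 //; apply: le_lt_trans Hk; exact: mulr_ge0.
have ltM : s`_m.-1 < Mthr r h by rewrite Mdef ltr_pdivlMr // mulrC.
have geM : forall i, (m <= i < n)%N -> Mthr r h <= s`_i.
  move=> i /andP [mi i_n].
  have k0 : (0 < k)%N by lia.
  have := Hk1 k0; rewrite kcondE; last by lia.
  have -> : (n - k.-1 = m.+1)%N by lia.
  have -> : (r - k.-1 = (r - k).+1)%N by lia.
  rewrite /= hsumS -leNgt -addn1 natrD mulrDl mul1r lerD2r => H.
  apply: le_trans; last exact: (hs_sorted h mi i_n).
  rewrite Mdef ler_pdivrMr // mulrC //.
split => //.
rewrite (hs_sum h (fun x => Num.min x (Mthr r h))) (@big_cat_nat _ _ _ m 0 n) //=; last by lia.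
rewrite (eq_big_nat _ _ (F2 := fun i => s`_i)); last first.
  move=> i /andP [_ im]; rewrite min_l // ltW //; apply: le_lt_trans ltM.
  apply: hs_sorted; lia.
rewrite (eq_big_nat _ _ (F2 := fun i => Mthr r h)); last first.
  by move=> i Hi; rewrite min_r // geM.
rewrite sumr_const_nat.
have -> : (n - m = k)%N by lia.
have -> : \sum_(0 <= i < m) s`_i = hsum h m by [].
have -> : hsum h m = Mthr r h * (r - k)%:R by rewrite Mdef divfK // gt_eqF.
rewrite -[Mthr r h *+ k]mulr_natr -mulrDr mulrC; congr (_ * _).
rewrite -natrD subnK //; lia.
Qed.


Lemma term_ineq (H M q : R) : 0 <= H -> 0 < M -> 0 < q -> q <= 1 ->
  (1 - Num.min H M / M) / (Num.min H M / M) * H ^+ 2 + M ^+ 2 * (Num.min H M / M)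
   <= (1 - q) / q * H ^+ 2 + M ^+ 2 * q.
Proof.
move=> H0 M0 q0 q1; set p := Num.min H M / M.
have qn : q != 0 by rewrite gt_eqF.
have Mn : M != 0 by rewrite gt_eqF.
have E1 : (1 - q) / q = q^-1 - 1 by field.
have uq : 0 < q^-1 by rewrite invr_gt0.
rewrite E1.
case: (leP M H) => HM.
  have -> : p = 1 by rewrite /p min_r // divff.
  have Hsq : M ^+ 2 <= H ^+ 2 by rewrite lerXn2r // ?nnegrE ltW.
  have Hd : 0 <= q^-1 - 1 by rewrite subr_ge0 invf_ge1.
  have K : 0 <= q^-1 * (1 - q) ^+ 2 * M ^+ 2.
    by apply: mulr_ge0; [apply: mulr_ge0; [exact: ltW | exact: sqr_ge0] | exact: sqr_ge0].
  have KE : q^-1 * (1 - q) ^+ 2 * M ^+ 2 = (q^-1 - 1) * M ^+ 2 + M ^+ 2 * q - M ^+ 2 by field.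
  have L : (q^-1 - 1) * M ^+ 2 <= (q^-1 - 1) * H ^+ 2 by exact: ler_wpM2l.
  rewrite subrr mul0r mulr1 ?add0r ?mul0r ?add0r; lra.
have -> : p = H / M by rewrite /p min_l // ltW.
have K : 0 <= q^-1 * (H - M * q) ^+ 2 by apply: mulr_ge0; [exact: ltW | exact: sqr_ge0].
have KE : q^-1 * (H - M * q) ^+ 2 = q^-1 * H ^+ 2 - 2 * M * H + M ^+ 2 * q by field.
have [->|Hn] := eqVneq H 0.
  rewrite mul0r expr0n /= !mulr0 !add0r; apply: mulr_ge0; [exact: sqr_ge0 | exact: ltW].
have LE : (1 - H / M) / (H / M) * H ^+ 2 + M ^+ 2 * (H / M) = 2 * M * H - H ^+ 2.
  by field; rewrite Mn Hn.
rewrite LE; lra.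
Qed.

End H.

Unset Implicit Arguments. Set Strict Implicit.
Local Open Scope classical_set_scope.
Lemma trV (R : realType) (q n : nat) (e : 'I_n -> R) (g : 'I_n -> 'cV[R]_q) (pi : 'I_n -> R) :
  \tr (Vtilde e g pi) = (4 / (n%:R ^+ 2)) * \sum_(i < n) ((1 - pi i) / pi i) * (hmVc e g i) ^+ 2.
Proof.
rewrite /Vtilde mxtraceZ; congr (_ * _).
rewrite raddf_sum; apply: eq_bigr => i _.
rewrite /= mxtraceZ mxtrace_mulC -(mulrA ((1 - pi i) / pi i)); congr (_ * _).
have c0 : 0 <= ((g i)^T *m g i) 0 0.
  rewrite mxE; apply: sumr_ge0 => j _; rewrite mxE -expr2; exact: sqr_ge0.
rewrite /hmVc exprMn sqr_sqrtr // real_normK ?num_real //; congr (_ * _).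
by rewrite /mxtrace big_ord1.
Qed.

Theorem theorem3 (R : realType) (d q n : nat)
  (Omega : set 'rV[R]_d) (Theta : set 'rV[R]_q)
  (x : 'I_n -> 'rV[R]_d) (y : 'I_n -> R)
  (ys : 'rV[R]_d -> 'rV[R]_q -> R) (thetahat : 'rV[R]_q) (r : nat) :
  (forall i, Omega (x i)) ->
  (forall i, differentiable (ys (x i)) thetahat) ->
  Theta thetahat ->
  (forall th, Theta th -> loss x y ys thetahat <= loss x y ys th) ->
  (1 <= r <= n.-1)%N ->
  let e := resid x y ys thetahat in
  let g := fun i => grad (ys (x i)) thetahat in
  let h := hmVc e g in
  (0%E < hord h (n - r))%E ->
  let pi0 := pimVc r h in
  [/\ \sum_(i < n) pi0 i = r%:R,
      (forall i, 0 <= pi0 i <= 1) &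
      forall pi : 'I_n -> R,
        \sum_(i < n) pi i = r%:R -> (forall i, 0 < pi i <= 1) ->
        \tr (Vtilde e g pi0) <= \tr (Vtilde e g pi)].
Proof.
move=> _ _ _ _ Hr e g h Hpos pi0.
have h0 : forall j, 0 <= h j.
  by move=> j; rewrite /h /hmVc mulr_ge0 ?sqrtr_ge0.
have [Mpos Hsum] := key h0 Hr Hpos.
set M := Mthr r h in Mpos Hsum.
have r0 : 0 < r%:R :> R by rewrite ltr0n; case/andP: Hr.
have pi0E : forall i, pi0 i = Num.min (h i) M / M.
  move=> i; rewrite /pi0 /pimVc -/M Hsum; field.
  by rewrite !gt_eqF.
have sum0 : \sum_(i < n) pi0 i = r%:R.
  under eq_bigr => i _ do rewrite pi0E.
  by rewrite -mulr_suml Hsum mulfK // gt_eqF.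
split => //.
  move=> i; rewrite pi0E; case: (leP (h i) M) => hM.
    rewrite divr_ge0 ?h0 ?(ltW Mpos) //=.
    by rewrite ler_pdivrMr // mul1r.
  by rewrite divff ?gt_eqF // ler01 lexx.
move=> pi spi Hpi.
rewrite !trV; apply: ler_wpM2l.
  by rewrite divr_ge0 // exprn_ge0.
set T := fun (p : R) (H : R) => (1 - p) / p * H ^+ 2.
have S : \sum_(i < n) (T (pi0 i) (h i) + M ^+ 2 * pi0 i) <=
         \sum_(i < n) (T (pi i) (h i) + M ^+ 2 * pi i).
  apply: ler_sum => i _; rewrite /T pi0E.
  by case/andP: (Hpi i) => p0 p1; apply: term_ineq.
move: S; rewrite !big_split /= -!mulr_sumr sum0 spi lerD2r.
by [].
Qed.
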